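(* Let $X,Y,Z$ be random variables on finite alphabets $\mathcal{X},\mathcal{Y},\mathcal{Z}$. For each $y\in\mathcal{Y}$ with $\Pr(Y=y)>0$, let $(A_y,B_y,C_y)$ be the random triple on $\mathcal{X}\times\mathcal{Y}\times\mathcal{Z}$ with $\Pr(A_y=x,B_y=y',C_y=z)=0$ if $\Pr(Z=z)=0$ and $\Pr(A_y=x,B_y=y',C_y=z)=\Pr(X=x,Y=y',Z=z)\Pr(Z=z\mid Y=y)/\Pr(Z=z)$ otherwise. Let $A_{Z|Y}$ be a random variable on $\mathcal{X}$, jointly distributed with $Y$, such that $\Pr(A_{Z|Y}=x,Y=y)=\Pr(Y=y)\Pr(A_y=x)$ for all $x\in\mathcal{X}$ and all $y$ with $\Pr(Y=y)>0$. Let $\operatorname{Un}(X\to Z\mid Y)=\sum_{y:\Pr(Y=y)>0}\Pr(Y=y)I(A_y;C_y)$ and $\operatorname{Red}(X,Y\to Z)=I(X;Z)-\operatorname{Un}(X\to Z\mid Y)$. Then $\operatorname{Red}(X,Y\to Z)=I(A_{Z|Y};Y)$.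
   Context: $I$ denotes mutual information. *)

(* Defs.v *)
From HB Require Import structures.
From mathcomp Require Import all_boot all_order all_algebra.
From mathcomp Require Import reals exp.
Set Implicit Arguments. Unset Strict Implicit. Unset Printing Implicit Defensive.
Import Order.TTheory GRing.Theory Num.Theory.
Local Open Scope ring_scope.

Section Defs.
Variable R : realType.

Definition is_pmf (T : finType) (p : T -> R) :=
  (forall t, 0 <= p t) /\ \sum_(t : T) p t = 1.

Definition mutinfo (A B : finType) (p : A -> B -> R) : R :=
  \sum_(a : A) \sum_(b : B)
     (if 0 < p a b then
        p a b * ln (p a b / ((\sum_(b' : B) p a b') * (\sum_(a' : A) p a' b)))
      else 0).

Variables (X Y Z : finType) (P : X -> Y -> Z -> R).

Definition pY (y : Y) : R := \sum_(x : X) \sum_(z : Z) P x y z.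
Definition pZ (z : Z) : R := \sum_(x : X) \sum_(y : Y) P x y z.
Definition pYZ (y : Y) (z : Z) : R := \sum_(x : X) P x y z.
Definition pXZ (x : X) (z : Z) : R := \sum_(y : Y) P x y z.

Definition condZY (z : Z) (y : Y) : R := pYZ y z / pY y.

Definition Qtriple (y : Y) (x : X) (y' : Y) (z : Z) : R :=
  if pZ z == 0 then 0 else P x y' z * condZY z y / pZ z.

Definition QAC (y : Y) (x : X) (z : Z) : R := \sum_(y' : Y) Qtriple y x y' z.

Definition QA (y : Y) (x : X) : R := \sum_(y' : Y) \sum_(z : Z) Qtriple y x y' z.

Definition Un : R := \sum_(y : Y | 0 < pY y) pY y * mutinfo (QAC y).

Definition Red : R := mutinfo pXZ - Un.

End Defs.

(* Main.v *)
Require Import Defs.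
From HB Require Import structures.
From mathcomp Require Import all_boot all_order all_algebra.
From mathcomp Require Import reals exp.
From mathcomp Require Import ring.
Import Order.TTheory GRing.Theory Num.Theory.
Local Open Scope ring_scope.

Section Gen.
Variable R : realType.
Definition xlnx (t : R) := t * ln t.

Lemma lnMp (a b : R) : 0 < a -> 0 < b -> ln (a * b) = ln a + ln b.
Proof. by move=> a0 b0; apply: lnM; rewrite qualifE. Qed.

Lemma xlnx_mul (a b : R) : 0 <= a -> 0 <= b ->
  xlnx (a * b) = a * b * ln a + a * b * ln b.
Proof.
rewrite le0r => /orP[/eqP->|a0]; first by rewrite /xlnx !mul0r add0r.
rewrite le0r => /orP[/eqP->|b0]; first by rewrite /xlnx !mulr0 !mul0r add0r.
by rewrite /xlnx lnMp // mulrDr.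
Qed.

Lemma mutinfoE (A B : finType) (q : A -> B -> R) : (forall a b, 0 <= q a b) ->
  mutinfo q = \sum_a \sum_b xlnx (q a b) - \sum_a xlnx (\sum_b q a b)
     - \sum_b xlnx (\sum_a q a b).
Proof.
move=> q0.
have E : forall a b, (if 0 < q a b then
        q a b * ln (q a b / ((\sum_(b' : B) q a b') * (\sum_(a' : A) q a' b)))
      else 0) = xlnx (q a b) - q a b * ln (\sum_b' q a b') - q a b * ln (\sum_a' q a' b).
  move=> a b; case: ifP => qp.
    have r0 : 0 < \sum_b' q a b'.
      apply: (lt_le_trans qp); rewrite (bigD1 b) //= lerDl; exact: sumr_ge0.
    have c0 : 0 < \sum_a' q a' b.
      apply: (lt_le_trans qp); rewrite (bigD1 a) //= lerDl; exact: sumr_ge0.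
    rewrite /xlnx lnMp ?invr_gt0 ?mulr_gt0 // lnV ?qualifE /= ?mulr_gt0 //.
    rewrite lnMp //; ring.
  have -> : q a b = 0 by apply/eqP; rewrite eq_le q0 andbT leNgt qp.
  by rewrite /xlnx !mul0r !subr0.
rewrite /mutinfo; under eq_bigr do under eq_bigr do rewrite E.
under eq_bigr do rewrite !sumrB.
rewrite !sumrB.
congr (_ - _ - _).
  by apply: eq_bigr => a _; rewrite /xlnx mulr_suml.
rewrite exchange_big /=; apply: eq_bigr => b _; rewrite /xlnx mulr_suml //.
Qed.
End Gen.
Arguments xlnx {R}.
Section Main.
Variables (R : realType) (X Y Z : finType) (P : X -> Y -> Z -> R).
Hypothesis P0 : forall x y z, 0 <= P x y z.

Let u x z := pXZ P x z / pZ P z.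
Let v y z := pYZ P y z / pY P y.

Lemma pXZ0 x z : 0 <= pXZ P x z. Proof. exact: sumr_ge0. Qed.
Lemma pYZ0 y z : 0 <= pYZ P y z. Proof. exact: sumr_ge0. Qed.
Lemma pY0 y : 0 <= pY P y. Proof. by apply: sumr_ge0 => *; apply: sumr_ge0. Qed.
Lemma pZ0 z : 0 <= pZ P z. Proof. by apply: sumr_ge0 => *; apply: sumr_ge0. Qed.

Lemma pZ_XZ z : pZ P z = \sum_x pXZ P x z.
Proof. by []. Qed.
Lemma pZ_YZ z : pZ P z = \sum_y pYZ P y z.
Proof. by rewrite /pZ exchange_big. Qed.
Lemma pY_YZ y : pY P y = \sum_z pYZ P y z.
Proof. by rewrite /pY exchange_big. Qed.

Lemma zero_sum (I : finType) (F : I -> R) i : (forall j, 0 <= F j) ->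
  \sum_j F j = 0 -> F i = 0.
Proof. by move=> F0 H; apply: (psumr_eq0P _ H) => // j _; apply: F0. Qed.

Lemma pZ_eq0 x z : pZ P z = 0 -> pXZ P x z = 0.
Proof. by rewrite pZ_XZ; apply: zero_sum => j; apply: pXZ0. Qed.
Lemma pZ_eq0' y z : pZ P z = 0 -> pYZ P y z = 0.
Proof. by rewrite pZ_YZ; apply: zero_sum => j; apply: pYZ0. Qed.
Lemma pY_eq0 y z : pY P y = 0 -> pYZ P y z = 0.
Proof. by rewrite pY_YZ; apply: zero_sum => j; apply: pYZ0. Qed.

Lemma u0 x z : 0 <= u x z. Proof. by rewrite /u divr_ge0 ?pXZ0 ?pZ0. Qed.
Lemma v0 y z : 0 <= v y z. Proof. by rewrite /v divr_ge0 ?pYZ0 ?pY0. Qed.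

Lemma uZ x z : u x z * pZ P z = pXZ P x z.
Proof.
rewrite /u; have [e|ne] := eqVneq (pZ P z) 0; first by rewrite e mulr0 pZ_eq0.
by rewrite divfK.
Qed.
Lemma Yv y z : pY P y * v y z = pYZ P y z.
Proof.
rewrite /v; have [e|ne] := eqVneq (pY P y) 0; first by rewrite e mul0r pY_eq0.
by rewrite mulrC divfK.
Qed.

Lemma QACE y x z : QAC P y x z = u x z * v y z.
Proof.
rewrite /QAC /Qtriple /u /v /condZY.
have [e|ne] := eqVneq (pZ P z) 0.
  by rewrite big1 ?pZ_eq0 ?mul0r // => y' _; rewrite e eqxx.
rewrite /pXZ -mulrA [RHS]mulrC [RHS]mulr_sumr; apply: eq_bigr => y' _; ring.
Qed.

Lemma QAE y x : QA P y x = \sum_z u x z * v y z.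
Proof.
rewrite /QA exchange_big /=; apply: eq_bigr => z _; exact: QACE.
Qed.

Lemma QA0 y x : 0 <= QA P y x.
Proof. by rewrite QAE; apply: sumr_ge0 => z _; rewrite mulr_ge0 ?u0 ?v0. Qed.

Lemma sum_uv y z : \sum_x u x z * v y z = v y z.
Proof.
rewrite -mulr_suml /u -mulr_suml -pZ_XZ.
have [e|ne] := eqVneq (pZ P z) 0; first by rewrite e invr0 mulr0 mul0r /v pZ_eq0' // mul0r.
by rewrite divff // mul1r.
Qed.

Lemma sum_Yv z : \sum_y pY P y * v y z = pZ P z.
Proof. by rewrite pZ_YZ; apply: eq_bigr => y _; rewrite Yv. Qed.

Lemma mutinfo_QAC y : mutinfo (QAC P y) =
  \sum_x \sum_z u x z * v y z * ln (u x z) - \sum_x xlnx (QA P y x).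
Proof.
rewrite mutinfoE; last by move=> a b; rewrite QACE mulr_ge0 ?u0 ?v0.
under eq_bigr do under eq_bigr do rewrite QACE xlnx_mul ?u0 ?v0 //.
under [X in _ - X - _]eq_bigr do under eq_bigr do rewrite QACE.
under [X in _ - X]eq_bigr do under eq_bigr do rewrite QACE.

under [X in _ - _ - X]eq_bigr do rewrite sum_uv.
under eq_bigr do rewrite big_split /=.
rewrite big_split /=.
have -> : \sum_x \sum_z u x z * v y z * ln (v y z) = \sum_z xlnx (v y z).
  rewrite exchange_big /=; apply: eq_bigr => z _; by rewrite -mulr_suml sum_uv.
have -> : \sum_x xlnx (\sum_z u x z * v y z) = \sum_x xlnx (QA P y x).
  by apply: eq_bigr => x _; rewrite QAE.
ring.
Qed.


Lemma sum_YQA x : \sum_y pY P y * QA P y x = \sum_z pXZ P x z.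
Proof.
under eq_bigr do rewrite QAE mulr_sumr.
rewrite exchange_big /=; apply: eq_bigr => z _.
rewrite -uZ -sum_Yv mulr_sumr; apply: eq_bigr => y _; ring.
Qed.

Lemma ln_u x z : pXZ P x z * ln (u x z) = xlnx (pXZ P x z) - pXZ P x z * ln (pZ P z).
Proof.
have [e|ne] := eqVneq (pXZ P x z) 0; first by rewrite /xlnx e !mul0r subr0.
have p0 : 0 < pXZ P x z by rewrite lt_def ne pXZ0.
have q0 : 0 < pZ P z.
  apply: (lt_le_trans p0); rewrite pZ_XZ (bigD1 x) //= lerDl.
  by apply: sumr_ge0 => *; apply: pXZ0.
rewrite /u ln_div ?qualifE //= /xlnx; ring.
Qed.

Lemma Un_E : Un P = \sum_x \sum_z xlnx (pXZ P x z) - \sum_z xlnx (pZ P z)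
   - \sum_y pY P y * \sum_x xlnx (QA P y x).
Proof.
rewrite /Un big_mkcond /=.
have -> : \sum_y (if 0 < pY P y then pY P y * mutinfo (QAC P y) else 0)
   = \sum_y pY P y * mutinfo (QAC P y).
  apply: eq_bigr => y _; case: ifP => // /negbT; rewrite -leNgt => h.
  have -> : pY P y = 0 by apply/eqP; rewrite eq_le h pY0.
  by rewrite mul0r.
transitivity (\sum_y (pY P y * (\sum_x \sum_z u x z * v y z * ln (u x z)) - pY P y * \sum_x xlnx (QA P y x))).
  by apply: eq_bigr => y _; rewrite mutinfo_QAC mulrBr.
rewrite sumrB; congr (_ - _).
have -> : \sum_y pY P y * (\sum_x \sum_z u x z * v y z * ln (u x z))
   = \sum_x \sum_z pXZ P x z * ln (u x z).
  under eq_bigr do rewrite mulr_sumr.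
  rewrite exchange_big /=; apply: eq_bigr => x _.
  under eq_bigr do rewrite mulr_sumr.
  rewrite exchange_big /=; apply: eq_bigr => z _.
  rewrite -uZ -sum_Yv mulr_sumr mulr_suml; apply: eq_bigr => y _; ring.
transitivity (\sum_x \sum_z (xlnx (pXZ P x z) - pXZ P x z * ln (pZ P z))).
  by apply: eq_bigr => x _; apply: eq_bigr => z _; rewrite ln_u.
rewrite (eq_bigr (fun x => \sum_z xlnx (pXZ P x z) - \sum_z pXZ P x z * ln (pZ P z))); last by move=> x _; rewrite sumrB.
rewrite sumrB; congr (_ - _).
rewrite exchange_big /=; apply: eq_bigr => z _.
by rewrite -mulr_suml -pZ_XZ.
Qed.

Variable AZY : X -> Y -> R.
Hypothesis A0 : forall x y, 0 <= AZY x y.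
Hypothesis H3 : forall y : Y, \sum_(x : X) AZY x y = pY P y.
Hypothesis H4 : forall (x : X) (y : Y), 0 < pY P y -> AZY x y = pY P y * QA P y x.

Lemma AE x y : AZY x y = pY P y * QA P y x.
Proof.
have [p|] := ltP 0 (pY P y); first exact: H4.
move=> h; have e : pY P y = 0 by apply/eqP; rewrite eq_le h pY0.
rewrite e mul0r; apply: (@zero_sum X (fun x => AZY x y) x) => //.
by rewrite H3.
Qed.

Lemma main : Red P = mutinfo AZY.
Proof.
rewrite /Red Un_E (mutinfoE _ _ _ _ A0) (mutinfoE _ _ _ (pXZ P)); last by move=> *; apply: pXZ0.
under [in RHS]eq_bigr do under eq_bigr do rewrite AE xlnx_mul ?pY0 ?QA0 //.
under [in RHS]eq_bigr do rewrite big_split /=.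
rewrite [in RHS]big_split /=.
have -> : \sum_x \sum_y pY P y * QA P y x * ln (pY P y) = \sum_y xlnx (\sum_x AZY x y).
  rewrite exchange_big /=; apply: eq_bigr => y _.
  by rewrite H3 -mulr_suml -H3 /xlnx; congr (_ * _); apply: eq_bigr => x _; rewrite ?H3 ?AE.
have -> : \sum_x \sum_y pY P y * QA P y x * ln (QA P y x) = \sum_y pY P y * \sum_x xlnx (QA P y x).
  rewrite exchange_big /=; apply: eq_bigr => y _.
  by rewrite mulr_sumr; apply: eq_bigr => x _; rewrite /xlnx mulrA.
have -> : \sum_x xlnx (\sum_y AZY x y) = \sum_x xlnx (\sum_z pXZ P x z).
  by apply: eq_bigr => x _; rewrite -sum_YQA; congr xlnx; apply: eq_bigr => y _; rewrite AE.
have -> : \sum_z xlnx (\sum_x pXZ P x z) = \sum_z xlnx (pZ P z) by [].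
ring.
Qed.

End Main.

Theorem lemma6 (R : realType) (X Y Z : finType) (P : X -> Y -> Z -> R)
  (AZY : X -> Y -> R) :
  is_pmf (fun t : X * Y * Z => P t.1.1 t.1.2 t.2) ->
  is_pmf (fun t : X * Y => AZY t.1 t.2) ->
  (forall y : Y, \sum_(x : X) AZY x y = pY P y) ->
  (forall (x : X) (y : Y), 0 < pY P y -> AZY x y = pY P y * QA P y x) ->
  Red P = mutinfo AZY.
Proof.
move=> [HP _] [HA _] H3 H4.
have P0 : forall x y z, 0 <= P x y z by move=> x y z; exact: (HP (x, y, z)).
have A0 : forall x y, 0 <= AZY x y by move=> x y; exact: (HA (x, y)).
exact: (@main R X Y Z P P0 AZY A0 H3 H4).
Qed.
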